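(* Let $X$ be a compact metric countable space and $f:X\to X$ a continuous function such that every accumulation point of $X$ is periodic. Let $a$ be an accumulation point of $X$ and $(a_n)_{n\in\mathbb N}$ a sequence in $X$ such that $f^p(a_n)\to f^p(a)$ for some $p\in\mathbb N^*$. If $b\in X$ is a periodic point with $b\in\bigcap_{n\in\mathbb N}\overline{\mathcal O_f(a_n)}$, then $b\in\mathcal O_f(a)$.
   Context: $\mathbb N^*$ denotes the set of free ultrafilters on $\mathbb N$. For $p\in\mathbb N^*$, the $p$-iterate $f^p:X\to X$ is defined by $f^p(x)=p\text{-}\lim_{n\to\infty}f^n(x)$, where $y=p\text{-}\lim x_n$ means $\{n: x_n\in V\}\in p$ for every neighborhood $V$ of $y$. The orbit of $x$ is $\mathcal O_f(x)=\{f^n(x):n\in\mathbb N\}$. A point $x$ is periodic if $f^n(x)=x$ for some $n\ge1$. An accumulation point is a non-isolated point. *)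

(* Defs.v *)
From HB Require Import structures.
From mathcomp Require Import all_boot all_order all_algebra.
From mathcomp Require Import all_classical all_reals all_analysis.
Set Implicit Arguments. Unset Strict Implicit. Unset Printing Implicit Defensive.
Import Order.TTheory GRing.Theory Num.Theory.
Local Open Scope classical_set_scope.

Definition free_ultrafilter (p : set (set nat)) : Prop :=
  ~ p set0 /\
  p setT /\
  (forall A B, p A -> p B -> p (A `&` B)) /\
  (forall A B, A `<=` B -> p A -> p B) /\
  (forall A, p A \/ p (~` A)) /\
  (forall A, finite_set A -> ~ p A).

Definition is_plim {X : topologicalType} (p : set (set nat)) (x : nat -> X) (y : X) :=
  forall V, nbhs y V -> p [set n | V (x n)].

(* p-iterate f^p(x) := p-lim f^n(x) (a chosen p-limit; unique in a compact
   Hausdorff space, where it always exists). *)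
Definition piter {X : topologicalType} (p : set (set nat)) (f : X -> X) (x : X) : X :=
  xget x (is_plim p (fun n => iter n f x)).

Definition forbit {X : Type} (f : X -> X) (x : X) : set X :=
  [set iter n f x | n in [set: nat]].

Definition periodic_pt {X : Type} (f : X -> X) (x : X) : Prop :=
  exists n, (0 < n)%N /\ iter n f x = x.

Definition accumulation_point {X : topologicalType} (x : X) : Prop :=
  limit_point [set: X] x.

(* Main.v *)
Require Import Defs.
From mathcomp Require Import all_boot all_order all_algebra.
From mathcomp Require Import all_classical all_reals all_analysis.
From mathcomp Require Import zify ring lra.
Import Order.TTheory GRing.Theory Num.Theory.
Local Open Scope classical_set_scope.

Lemma closure_ball_sub (R : realType) (X : pseudoMetricType R) (x : X) (r s : R) :
  (0 < r)%R -> (r < s)%R -> closure (ball x r) `<=` ball x s.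
Proof.
move=> r0 rs w cw.
have /cw [u [bxu bwu]] : nbhs w (ball w (s - r)%R) by apply: nbhsx_ballx; rewrite subr_gt0.
have := ball_triangle bxu (ball_sym bwu).
by rewrite addrC subrK.
Qed.

Lemma ball_nbhs_ex (R : realType) (X : pseudoMetricType R) (x : X) (P : set X) :
  nbhs x P -> exists2 e : R, (0 < e)%R & ball x e `<=` P.
Proof. by move=> /nbhs_ballP [e e0 H]; exists e. Qed.

Arguments ball_nbhs_ex {R X x P}.

Lemma iter_nbhs (X : topologicalType) (f : X -> X) : continuous f ->
  forall n x V, nbhs (iter n f x) V -> nbhs x [set w | V (iter n f w)].
Proof.
move=> cf; elim=> [|n IH] x V /=; first by apply: filterS => w.
move=> HV; have := cf _ V HV => /= H.
exact: (IH x _ H).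
Qed.

Lemma iter_mulk (T : Type) (f : T -> T) (z : T) k :
  iter k f z = z -> forall t, iter (t * k) f z = z.
Proof.
move=> hz; elim=> [|t IH] //.
by rewrite mulSn iterD IH hz.
Qed.

Lemma iter_modk (T : Type) (f : T -> T) (z : T) k :
  iter k f z = z -> forall t, iter t f z = iter (t %% k) f z.
Proof.
move=> hz t; rewrite {1}(divn_eq t k) addnC iterD.
by rewrite iter_mulk.
Qed.

Lemma nested_compact (X : topologicalType) (K : nat -> set X) :
  compact [set: X] -> (forall n, closed (K n)) -> (forall n, K n !=set0) ->
  (forall n, K n.+1 `<=` K n) -> exists x, forall n, K n x.
Proof.
move=> cX cK nK dK.
have dK' : forall n m, (n <= m)%N -> K m `<=` K n.
  move=> n m /subnK <-; elim: (m - n)%N => [|d IH] //= w.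
  by rewrite addSn => /dK /IH.
have FF : Filter (filter_from setT K).
  apply: filter_fromT_filter; first by exists 0%N.
  move=> i j; exists (maxn i j) => w Kw; split.
    by apply: (dK' i (maxn i j)) => //; rewrite leq_maxl.
  by apply: (dK' j (maxn i j)) => //; rewrite leq_maxr.
have PF : ProperFilter (filter_from setT K).
  by apply: filter_from_proper => i _; apply: nK.
have [|x [_ cx]] := cX _ PF; first by exists 0%N.
exists x => n; rewrite (closure_id (K n)).1 //.
move=> B nB; apply: cx => //; by exists n.
Qed.

Definition omega (X : topologicalType) (f : X -> X) (y : X) : set X :=
  [set c | forall N, closure [set iter m f y | m in [set m | (N <= m)%N]] c].

Arguments omega {X}.

Lemma omega_closed (X : topologicalType) (f : X -> X) y : closed (omega f y).
Proof.
move=> c cc N; apply: closed_closure.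
by apply: (closureS _ cc) => v /(_ N).
Qed.

Lemma omega_cluster (X : topologicalType) (f : X -> X) y (K : set X) :
  compact [set: X] -> closed K ->
  (forall N, exists2 m, (N <= m)%N & K (iter m f y)) ->
  exists c, K c /\ omega f y c.
Proof.
move=> cX cK inf.
pose K' N := closure [set iter m f y | m in [set m | (N <= m)%N /\ K (iter m f y)]].
have [|||c Hc] := @nested_compact X K' cX.
- by move=> N; apply: closed_closure.
- move=> N; have [m Nm Km] := inf N; exists (iter m f y).
  by apply: subset_closure; exists m.
- move=> N; apply: closureS => w [m [Nm Km] <-]; exists m => //.
  by split => //; apply: ltnW.
exists c; split.
  rewrite (closure_id K).1 //; apply: (closureS _ (Hc 0%N)).
  by move=> w [m [_ Km] <-].
move=> N; apply: (closureS _ (Hc N)).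
by move=> w [m [Nm _] <-]; exists m.
Qed.

Lemma isolated_pt (R : realType) (X : pseudoMetricType R) (Q : set X) :
  hausdorff_space X -> compact [set: X] -> countable [set: X] ->
  closed Q -> Q !=set0 ->
  exists z, Q z /\ exists2 e : R, (0 < e)%R & forall w, Q w -> ball z e w -> w = z.
Proof.
move=> hX cX /countable_injP [g ginj] cQ [c0 Qc0].
apply: contrapT => H.
have niso : forall z (e : R), Q z -> (0 < e)%R -> exists w, [/\ Q w, ball z e w & w <> z].
  move=> z e Qz e0; apply: contrapT => nw; apply: H; exists z; split => //.
  exists e => // w Qw bw; apply: contrapT => wz; apply: nw; by exists w.
have step : forall (n : nat) (c : X) (r : R), Q c -> (0 < r)%R ->
    exists c' : X, exists r' : R, [/\ Q c', (0 < r')%R,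
      closure (ball c' r') `<=` closure (ball c r) &
      forall q, g q = n -> ~ closure (ball c' r') q].
  move=> n c r Qc r0.
  have [[q gq]|nq] := pselect (exists q, g q = n); last first.
    exists c, r; split => //; last by move=> q gq _; apply: nq; exists q.
  have r20 : (0 < r / 2)%R by rewrite divr_gt0.
  have [c' [Qc' bcc' c'q]] : exists c', [/\ Q c', ball c (r / 2)%R c' & c' <> q].
    have [cq|cq] := pselect (c = q); last by exists c; split => //; apply: ballxx.
    have [w [Qw bw wc]] := niso c _ Qc r20.
    by exists w; split => //; rewrite -cq.
  have [eps eps0 sep] : exists2 eps : R, (0 < eps)%R &
      forall u, ball c' eps u -> ball q eps u -> False.
    apply: contrapT => nsep; apply: c'q; apply: hX => A B nA nB.
    have [e1 e10 sA] := ball_nbhs_ex nA; have [e2 e20 sB] := ball_nbhs_ex nB.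
    apply: contrapT => nAB; apply: nsep; exists (Num.min e1 e2).
      by rewrite lt_min e10 e20.
    move=> u bu bqu; apply: nAB; exists u; split.
      by apply: sA; apply: le_ball bu; rewrite ge_min lexx.
    by apply: sB; apply: le_ball bqu; rewrite ge_min lexx orbT.
  pose s := Num.min (r / 2)%R eps.
  have s0 : (0 < s)%R by rewrite lt_min r20 eps0.
  have sub : closure (ball c' (s / 2)%R) `<=` ball c' s.
    apply: closure_ball_sub; first by rewrite divr_gt0.
    by rewrite ltr_pdivrMr // ltr_pMr // ltr1n.
  exists c', (s / 2)%R; split => //.
  - by rewrite divr_gt0.
  - move=> w /sub bw; apply: subset_closure.
    have sr : (s <= r / 2)%R by rewrite /s ge_min lexx.
    have := ball_triangle bcc' (le_ball sr bw).
    by rewrite -splitr.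
  - move=> q' gq' /sub bq'.
    have qq : q' = q by apply: ginj; rewrite ?inE // gq gq'.
    subst q'; apply: (sep q); last by apply: ballxx.
    by apply: le_ball bq'; rewrite /s ge_min lexx orbT.
have [F HF] : {F : nat * (X * R) -> X * R & forall nc : nat * (X * R),
    Q nc.2.1 -> (0 < nc.2.2)%R ->
    [/\ Q (F nc).1, (0 < (F nc).2)%R,
      closure (ball (F nc).1 (F nc).2) `<=` closure (ball nc.2.1 nc.2.2) &
      forall q, g q = nc.1 -> ~ closure (ball (F nc).1 (F nc).2) q]}.
  apply: (@choice _ _ (fun nc cr' => Q nc.2.1 -> (0 < nc.2.2)%R ->
    [/\ Q cr'.1, (0 < cr'.2)%R,
      closure (ball cr'.1 cr'.2) `<=` closure (ball nc.2.1 nc.2.2) &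
      forall q, g q = nc.1 -> ~ closure (ball cr'.1 cr'.2) q])).
  move=> [n [c r]] /=.
  have [Qc|nQc] := pselect (Q c); last by exists (c, r).
  have [r0|nr0] := pselect (0 < r)%R; last by exists (c, r).
  have [c' [r' H']] := step n c r Qc r0; by exists (c', r').
pose sq := fix sq n := if n is m.+1 then F (m, sq m) else (c0, 1%R).
have sqP : forall n, Q (sq n).1 /\ (0 < (sq n).2)%R.
  elim=> [|n [IH1 IH2]] /=; first by split.
  by have [] := HF (n, sq n) IH1 IH2.
pose K n := Q `&` closure (ball (sq n).1 (sq n).2).
have [||| x Hx] := @nested_compact X K cX.
- by move=> n; apply: closedI => //; apply: closed_closure.
- move=> n; exists (sq n).1; split; first by case: (sqP n).
  by apply: subset_closure; apply: ballxx; case: (sqP n).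
- move=> n w [Qw cw]; split => //.
  have [Q1 Q2] := sqP n; have [_ _ H3 _] := HF (n, sq n) Q1 Q2.
  exact: H3.
- have [Q1 Q2] := sqP (g x); have [_ _ _ H4] := HF (g x, sq (g x)) Q1 Q2.
  by apply: (H4 x) => //; case: (Hx (g x).+1).
Qed.
Arguments isolated_pt {R X Q}.

Lemma track (R : realType) (X : pseudoMetricType R) (f : X -> X) (y : X) :
  hausdorff_space X -> compact [set: X] -> countable [set: X] -> continuous f ->
  (forall x : X, accumulation_point x -> periodic_pt f x) ->
  exists z : X, exists k m0 : nat, [/\ (0 < k)%N, iter k f z = z &
    forall e : R, (0 < e)%R -> exists J, forall j, (J <= j)%N ->
      ball z e (iter (m0 + j * k) f y)].
Proof.
move=> hX cX ctX cf hper.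
have [c [_ Qc]] := @omega_cluster X f y setT cX closedT (fun N => ex_intro2 _ _ N (leqnn N) I).
have [z [Qz [eps eps0 iso]]] := isolated_pt hX cX ctX (omega_closed _ f y) (ex_intro _ c Qc).
have [k [k0 hk]] : periodic_pt f z.
  have [acc|nacc] := pselect (accumulation_point z); first exact: hper.
  have [U nU HU] : exists2 U, nbhs z U & forall w, U w -> w = z.
    apply: contrapT => nU; apply: nacc => U0 nU0; apply: contrapT => ne.
    apply: nU; exists U0 => // w Uw; apply: contrapT => wz; apply: ne.
    by exists w; split => //; apply/eqP.
  have [w1 [[m1 _ <-] /HU e1]] := Qz 0%N U nU.
  have [w2 [[m2 hm2 <-] /HU e2]] := Qz m1.+1 U nU.
  exists (m2 - m1)%N; split; first by rewrite subn_gt0.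
  by rewrite -{1}e1 -iterD subnK ?e2 //; apply: ltnW.
pose s := (eps / 2)%R.
have s0 : (0 < s)%R by rewrite divr_gt0.
have seps : (s < eps)%R by rewrite /s ltr_pdivrMr // ltr_pMr // ltr1n.
have [d0 d00 Hd0] : exists2 d0 : R, (0 < d0)%R &
    ball z d0 `<=` [set w | ball z s (iter k f w)].
  apply: ball_nbhs_ex; apply: iter_nbhs => //; rewrite hk; exact: nbhsx_ballx.
pose d := Num.min d0 s.
have d0' : (0 < d)%R by rewrite lt_min d00 s0.
have dd0 : (d <= d0)%R by rewrite /d ge_min lexx.
have ds : (d <= s)%R by rewrite /d ge_min lexx orbT.
have deps : (d < eps)%R by apply: le_lt_trans seps.
pose U := interior (ball z d).
have oU : open U by apply: open_interior.
have Uz : U z by rewrite /U /interior; apply: nbhsx_ballx.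
have Ub : U `<=` ball z d by apply: interior_subset.
pose A := closure (ball z s) `&` ~` U.
have cA : closed A by apply: closedI; [apply: closed_closure | apply: open_closedC].
have [N HN] : exists N, forall m, (N <= m)%N -> ~ A (iter m f y).
  apply: contrapT => nN.
  have [|w [[cw nUw] Qw]] := @omega_cluster X f y A cX cA.
    move=> N; apply: contrapT => nm; apply: nN; exists N => m Nm Am.
    by apply: nm; exists m.
  have := iso w Qw (closure_ball_sub _ _ _ _ _ s0 seps _ cw) => wz.
  by apply: nUw; rewrite wz.
have [w0 [[m0 Nm0 <-] Um0]] := Qz N U (open_nbhs_nbhs (conj oU Uz)).
have inU : forall j, U (iter (m0 + j * k) f y).
  elim=> [|j IH]; first by rewrite mul0n addn0.
  have e : (m0 + j.+1 * k = k + (m0 + j * k))%N by rewrite mulSn; lia.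
  rewrite e iterD.
  have bs : ball z s (iter k f (iter (m0 + j * k) f y)).
    by apply: Hd0; apply: (le_ball dd0); apply: Ub.
  apply: contrapT => nU; apply: (HN (k + (m0 + j * k))%N).
    by apply: leq_trans Nm0 _; lia.
  by rewrite iterD; split => //; apply: subset_closure.
exists z, k, m0; split => // e e0.
apply: contrapT => nJ.
pose Kc := closure (ball z d) `&` ~` interior (ball z e).
have cKc : closed Kc by apply: closedI; [apply: closed_closure | apply: open_closedC; apply: open_interior].
have [|w [[cw nw] Qw]] := @omega_cluster X f y Kc cX cKc.
  move=> M; apply: contrapT => nM; apply: nJ; exists M => j Mj.
  apply: contrapT => nb; apply: nM; exists (m0 + j * k)%N.
    apply: leq_trans Mj _; apply: leq_trans (leq_addl m0 _).
    by rewrite leq_pmulr.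
  split; first by apply: subset_closure; apply: Ub.
  by move=> /interior_subset.
have := iso w Qw (closure_ball_sub _ _ _ _ _ d0' deps _ cw) => wz.
by apply: nw; rewrite wz /interior; apply: nbhsx_ballx.
Qed.

Lemma uf_ge (p : set (set nat)) : free_ultrafilter p -> forall N, p [set m | (N <= m)%N].
Proof.
move=> [p0 [pT [pI [pS [pU pF]]]]] N.
have [//|pc] := pU [set m | (N <= m)%N].
exfalso; apply: (pF `I_N) => //; apply: pS pc => m /= nm.
by rewrite ltnNge; apply/negP.
Qed.

Arguments uf_ge {p}.

Lemma uf_split (p : set (set nat)) : free_ultrafilter p ->
  forall k (C : nat -> set nat) (A : set nat), p A ->
  A `<=` [set m | exists2 r, (r < k)%N & C r m] -> exists2 r, (r < k)%N & p (C r).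
Proof.
move=> [p0 [pT [pI [pS [pU pF]]]]]; elim=> [|k IH] C A pA sA.
  exfalso; apply: p0; apply: pS pA => m /sA [r].
  by rewrite ltn0.
have [pk|pnk] := pU (C k); first by exists k.
have [|r rk pr] := IH C (A `&` ~` C k) (pI _ _ pA pnk).
  move=> m [/sA [r rk Cr] nC]; exists r => //.
  move: rk; rewrite ltnS leq_eqVlt => /orP [/eqP rk|//].
  by subst r.
by exists r => //; apply: ltnW.
Qed.

Arguments uf_split {p}.

Lemma plim_unique (X : topologicalType) (p : set (set nat)) (x : nat -> X) y1 y2 :
  hausdorff_space X -> free_ultrafilter p -> is_plim p x y1 -> is_plim p x y2 -> y1 = y2.
Proof.
move=> hX [p0 [pT [pI [pS [pU pF]]]]] h1 h2; apply: hX => A B nA nB.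
apply: contrapT => nAB; apply: p0.
apply: pS (pI _ _ (h1 A nA) (h2 B nB)) => m [Am Bm]; apply: nAB.
by exists (x m).
Qed.

Arguments plim_unique {X p x y1 y2}.

Lemma piter_eq (X : topologicalType) (p : set (set nat)) (f : X -> X) y w :
  hausdorff_space X -> free_ultrafilter p -> is_plim p (fun n => iter n f y) w ->
  piter p f y = w.
Proof.
move=> hX pu hw; rewrite /piter; apply: xget_unique => // w' hw'.
exact: plim_unique hX pu hw' hw.
Qed.

Arguments iter_nbhs {X f}.

Lemma plim_track (R : realType) (X : pseudoMetricType R) (f : X -> X)
  (p : set (set nat)) (y z : X) (k m0 : nat) :
  hausdorff_space X -> continuous f -> free_ultrafilter p ->
  (0 < k)%N -> iter k f z = z ->
  (forall e : R, (0 < e)%R -> exists J, forall j, (J <= j)%N ->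
      ball z e (iter (m0 + j * k) f y)) ->
  exists r, piter p f y = iter r f z.
Proof.
move=> hX cf pu k0 hk conv.
pose C r := [set m | (m0 <= m)%N /\ ((m - m0) %% k = r)%N].
have [r rk pr] := uf_split pu k C _ (uf_ge pu m0) (fun m hm => ex_intro2 _ _ ((m - m0) %% k)%N (ltn_pmod _ k0) (conj hm erefl)).
exists r; apply: piter_eq => // V nV.
have [e e0 He] := ball_nbhs_ex (iter_nbhs cf r z V nV).
have [J HJ] := conv e e0.
have [p0 [pT [pI [pS [pU pF]]]]] := pu.
apply: pS (pI _ _ pr (uf_ge pu (m0 + J * k)%N)) => m [[m0m hr] Jm] /=.
pose j := ((m - m0) %/ k)%N.
have em : m = (r + (m0 + j * k))%N.
  have := divn_eq (m - m0) k; rewrite hr -/j => h.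
  set t := (j * k)%N in h *; clearbody t; lia.
have Jj : (J <= j)%N.
  rewrite /j leq_divRL //; move: Jm => /= Jm; set t := (J * k)%N in Jm *; clearbody t; lia.
by rewrite em iterD; apply: (He _ (HJ j Jj)).
Qed.

Lemma finite_iter_closed (X : topologicalType) (f : X -> X) (y : X) (M : nat) :
  hausdorff_space X -> closed [set iter m f y | m in `I_M].
Proof.
move=> hX; apply: (accessible_finite_set_closed.1 (hausdorff_accessible hX)).
exact: finite_image.
Qed.

Lemma b_in_cycle (R : realType) (X : pseudoMetricType R) (f : X -> X)
  (y z b : X) (k m0 : nat) :
  hausdorff_space X -> continuous f ->
  (0 < k)%N -> iter k f z = z ->
  (forall e : R, (0 < e)%R -> exists J, forall j, (J <= j)%N ->
      ball z e (iter (m0 + j * k) f y)) ->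
  periodic_pt f b -> closure (forbit f y) b ->
  exists i, b = iter i f z.
Proof.
move=> hX cf k0 hk conv [l [l0 hl]] cb.
apply: contrapT => nb.
pose S := [set iter i f z | i in `I_k].
have cS : closed S by apply: finite_iter_closed.
have [eta eta0 Heta] : exists2 eta : R, (0 < eta)%R & ball b eta `<=` ~` S.
  apply: ball_nbhs_ex; apply: open_nbhs_nbhs; split; first exact: closed_openC.
  by move=> [i _ ei]; apply: nb; exists i.
pose e := (eta / 2)%R.
have e0 : (0 < e)%R by rewrite divr_gt0.
have ee : (e + e = eta)%R by rewrite /e -splitr.
have unif : forall n, exists J, forall r j, (r < n)%N -> (J <= j)%N ->
    ball (iter r f z) e (iter r f (iter (m0 + j * k) f y)).
  elim=> [|n [J1 HJ1]]; first by exists 0%N => r j; rewrite ltn0.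
  have [e' e'0 He'] := ball_nbhs_ex (iter_nbhs cf n z _ (nbhsx_ballx (iter n f z) e e0)).
  have [J2 HJ2] := conv e' e'0.
  exists (maxn J1 J2) => r j; rewrite ltnS leq_eqVlt => /orP [/eqP ->|rn] Jj.
    by apply: He'; apply: HJ2; apply: leq_trans Jj; rewrite leq_maxr.
  by apply: HJ1 => //; apply: leq_trans Jj; rewrite leq_maxl.
have [J HJ] := unif k.
pose M := (m0 + J * k)%N.
have near : forall m, (M <= m)%N -> exists r, ball (iter r f z) e (iter m f y) /\ S (iter r f z).
  move=> m Mm; pose j := ((m - m0) %/ k)%N; pose r := ((m - m0) %% k)%N.
  have em : m = (r + (m0 + j * k))%N.
    have := divn_eq (m - m0) k; rewrite -/j -/r => h.
    move: Mm; rewrite /M => Mm.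
    set t := (j * k)%N in h *; clearbody t; set t' := (J * k)%N in Mm; clearbody t'; lia.
  have Jj : (J <= j)%N.
    rewrite /j leq_divRL //; move: Mm; rewrite /M => Mm.
    set t := (J * k)%N in Mm *; clearbody t; lia.
  exists r; split; last by exists r => //; rewrite /r /= ltn_pmod.
  by rewrite em iterD; apply: HJ => //; rewrite /r ltn_pmod.
have F := finite_iter_closed _ f y M hX.
have [Fb|nFb] := pselect ([set iter m f y | m in `I_M] b).
  have [m mM bm] := Fb.
  have e1 : iter (M * l + m) f y = b by rewrite iterD bm iter_mulk.
  have [r [br Sr]] := near (M * l + m)%N (leq_trans (leq_pmulr _ l0) (leq_addr _ _)).
  rewrite e1 in br.
  apply: (Heta (iter r f z)) => //.
  by apply: (le_ball (_ : e <= eta)%R); [rewrite -ee lerDr ltW | apply: ball_sym].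
have nbF : nbhs b (ball b e `&` ~` [set iter m f y | m in `I_M]).
  apply: filterI; first exact: nbhsx_ballx.
  by apply: open_nbhs_nbhs; split; [exact: closed_openC | exact: nFb].
have [w [[m _ <-] [bw nF]]] := cb _ nbF.
have Mm : (M <= m)%N by rewrite leqNgt; apply/negP => mM; apply: nF; exists m.
have [r [br Sr]] := near m Mm.
apply: (Heta (iter r f z)) => //.
by rewrite -ee; apply: ball_triangle bw (ball_sym br).
Qed.

Arguments track {R X f} y.
Arguments plim_track {R X f p y z k m0}.
Arguments b_in_cycle {R X f y z b k m0}.

Lemma cycle_shift (T : Type) (f : T -> T) (z : T) (k r i : nat) :
  (0 < k)%N -> iter k f z = z -> iter r f z = iter (r + k.-1 * i) f (iter i f z).
Proof.
move=> k0 hk; rewrite -iterD.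
have -> : (r + k.-1 * i + i = r + i * k)%N.
  by case: k k0 hk => // k' _ _ /=; ring.
by rewrite iterD iter_mulk.
Qed.

Theorem theorem3p10 (R : realType) (X : pseudoMetricType R)
  (f : X -> X) (p : set (set nat)) (a : X) (an : nat -> X) (b : X) :
  hausdorff_space X ->
  compact [set: X] ->
  countable [set: X] ->
  continuous f ->
  (forall x : X, accumulation_point x -> periodic_pt f x) ->
  free_ultrafilter p ->
  accumulation_point a ->
  (fun n => piter p f (an n)) @ \oo --> piter p f a ->
  periodic_pt f b ->
  (forall n, closure (forbit f (an n)) b) ->
  forbit f a b.
Proof.
move=> hX cX ctX cf hper pu acca cvg perb clb.
have [ka [ka0 hka]] := hper a acca.
have [ra hra] : exists r, piter p f a = iter r f a.
  apply: (@plim_track R X f p a a ka 0%N hX cf pu ka0 hka) => e e0.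
  by exists 0%N => j _; rewrite add0n iter_mulk //; apply: ballxx.
have [l [l0 hl]] := perb.
pose Sb := [set iter i f b | i in `I_l].
have cSb : closed Sb by apply: finite_iter_closed.
have inSb : forall n, Sb (piter p f (an n)).
  move=> n.
  have [z [k [m0 [k0 hk conv]]]] := track (an n) hX cX ctX cf hper.
  have [r hr] := plim_track hX cf pu k0 hk conv.
  have [i hi] := b_in_cycle hX cf k0 hk conv perb (clb n).
  rewrite hr (cycle_shift _ _ _ _ r i k0 hk) -hi (iter_modk _ _ _ _ hl).
  by exists ((r + k.-1 * i) %% l)%N => //=; rewrite ltn_pmod.
have := closed_cvg _ cSb (nearW _ inSb) _ cvg.
move=> [j _ hj].
exists (l.-1 * j + ra)%N => //.
rewrite iterD -hra -hj.
by have := cycle_shift _ f b l 0 j l0 hl; rewrite add0n /= => <-.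
Qed.
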